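(* Let $d \geq 2$, $n \geq 1$, $\varphi(t) = \frac12 t^2$ and $w_{ij} = 1$ for all $i,j$. If $X \in \mathcal{M}$ is a critical point of $f(X) = \frac14\|X^\top X\|_F^2$ at which the Riemannian Hessian is negative semidefinite, then $x_i^\top x_j \neq 0$ for all $i, j$.
   Context: $\mathcal{M} = (\mathbb{S}^{d-1})^n$ is the set of $X \in \mathbb{R}^{d\times n}$ with unit-norm columns $x_1,\dots,x_n$, a Riemannian submanifold of $\mathbb{R}^{d\times n}$ with the Frobenius metric; gradient and Hessian are Riemannian. *)

(* Defs.v *)
From HB Require Import structures.
From mathcomp Require Import all_boot all_order all_algebra.
From mathcomp Require Import all_classical all_reals all_analysis.
Set Implicit Arguments. Unset Strict Implicit. Unset Printing Implicit Defensive.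
Import Order.TTheory GRing.Theory Num.Theory.
Import numFieldNormedType.Exports.
Local Open Scope ring_scope.

Section Sphere.
Variables (R : realType) (d n : nat).
Notation Mat := 'M[R]_(d, n).

Definition frob (A B : Mat) : R := \sum_(k < d) \sum_(i < n) A k i * B k i.

Definition coldot (X Y : Mat) (i j : 'I_n) : R := \sum_(k < d) X k i * Y k j.

(* X belongs to M = (S^{d-1})^n : unit-norm columns *)
Definition on_M (X : Mat) : Prop := forall i, coldot X X i i = 1.

Definition tangent (X V : Mat) : Prop := forall i, coldot X V i i = 0.

Definition proj (X Z : Mat) : Mat :=
  \matrix_(k < d, i < n) (Z k i - coldot X Z i i * X k i).

Definition egrad (f : Mat -> R) (X : Mat) : Mat :=
  \matrix_(k < d, i < n) ('D_(delta_mx k i) f X).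

Definition ehess (f : Mat -> R) (X V : Mat) : Mat :=
  'D_V (egrad f) X.

Definition rgrad (f : Mat -> R) (X : Mat) : Mat := proj X (egrad f X).

(* Riemannian Hessian on M (product of spheres), Absil–Mahony–Sepulchre:
   Hess f(X)[V] = Proj_X(D^2 f(X)[V]) - V ddiag(X^T grad f(X)) *)
Definition rhess (f : Mat -> R) (X V : Mat) : Mat :=
  \matrix_(k < d, i < n)
    (proj X (ehess f X V) k i - V k i * coldot X (egrad f X) i i).

Definition fobj (X : Mat) : R :=
  4^-1 * \sum_(i < n) \sum_(j < n) (coldot X X i j) ^+ 2.

End Sphere.

(* Main.v *)
Set Warnings "-notation-overridden,-ambiguous-paths,-notation-incompatible-prefix".
Require Import Defs.
From HB Require Import structures.
From mathcomp Require Import all_boot all_order all_algebra.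
From mathcomp Require Import all_classical all_reals all_analysis.
From mathcomp Require Import ring lra.
Import Order.TTheory GRing.Theory Num.Theory.
Import numFieldNormedType.Exports.
Local Open Scope ring_scope.
Local Open Scope classical_set_scope.

Lemma D_poly (R : realType) (V W : normedModType R) (f : V -> W) (a v : V) (B C D E : W) :
  (forall h : R, f (h *: v + a) - f a = h *: B + h^+2 *: C + h^+3 *: D + h^+4 *: E) ->
  'D_v f a = B.
Proof.
move=> Hf; rewrite /derive.
apply: cvg_lim => //.
apply: (@cvg_trans _ ((fun h : R => B + h *: (C + h *: (D + h *: E))) @ 0^')).
  apply: near_eq_cvg; near=> h.
  have hN0 : h != 0 by near: h; exact: nbhs_dnbhs_neq.
  rewrite /= Hf !scalerDr !scalerA.
  have e1 : h^-1 * h = 1 by rewrite mulVf.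
  have e2 : h^-1 * h^+2 = h by rewrite expr2 mulrA e1 mul1r.
  have e3 : h^-1 * h^+3 = h * h by rewrite exprS mulrA e1 mul1r expr2.
  have e4 : h^-1 * h^+4 = h * (h * h) by rewrite exprS mulrA e1 mul1r exprS expr2.
  rewrite e1 e2 e3 e4 scale1r.
  rewrite -!scalerA -!addrA; congr (_ + _); rewrite -scalerDr; congr (_ *: _); rewrite -scalerDr; congr (_ + _); rewrite -scalerDr.
have L : (fun h : R => B + h *: (C + h *: (D + h *: E))) @ 0 --> B + 0 *: (C + 0 *: (D + 0 *: E)).
  apply: cvgD; first exact: cvg_cst.
  apply: cvgZ; first exact: cvg_id.
  apply: cvgD; first exact: cvg_cst.
  apply: cvgZ; first exact: cvg_id.
  apply: cvgD; first exact: cvg_cst.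
  apply: cvgZ; first exact: cvg_id.
  exact: cvg_cst.
rewrite scale0r addr0 in L.
exact: cvg_within_filter L.
Unshelve. all: by end_near.
Qed.

Arguments D_poly {R V W f a v B C D E}.

Section S.
Variables (R : realType) (d n : nat).
Notation Mat := 'M[R]_(d, n).
Implicit Types (A Y : Mat).

Lemma coldotC Y a b : coldot Y Y a b = coldot Y Y b a.
Proof. by apply: eq_bigr => k _; rewrite mulrC. Qed.

Lemma coldot_shift A Y (h : R) a b :
  coldot (h *: A + Y) (h *: A + Y) a b =
  coldot Y Y a b + h * (coldot A Y a b + coldot Y A a b) + h^+2 * coldot A A a b.
Proof.
rewrite /coldot mulrDr !mulr_sumr -!big_split /=.
by apply: eq_bigr => k _; rewrite !mxE; ring.
Qed.

Lemma sum2D (F G : 'I_n -> 'I_n -> R) :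
  \sum_a \sum_b F a b + \sum_a \sum_b G a b = \sum_a \sum_b (F a b + G a b).
Proof. by rewrite -big_split; apply: eq_bigr => a _; rewrite -big_split. Qed.

Lemma sum2B (F G : 'I_n -> 'I_n -> R) :
  \sum_a \sum_b F a b - \sum_a \sum_b G a b = \sum_a \sum_b (F a b - G a b).
Proof. by rewrite -sumrB; apply: eq_bigr => a _; rewrite -sumrB. Qed.

Lemma sum2M (c : R) (F : 'I_n -> 'I_n -> R) :
  c * \sum_a \sum_b F a b = \sum_a \sum_b (c * F a b).
Proof. by rewrite mulr_sumr; apply: eq_bigr => a _; rewrite mulr_sumr. Qed.


Notation g Y a b := (coldot Y Y a b).
Notation p A Y a b := (coldot A Y a b + coldot Y A a b).

Lemma fobj_shift A Y (h : R) :
  fobj (h *: A + Y) - fobj Y =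
  h *: (4^-1 * \sum_a \sum_b (2 * g Y a b * p A Y a b))
  + h^+2 *: (4^-1 * \sum_a \sum_b (p A Y a b ^+ 2 + 2 * g Y a b * g A a b))
  + h^+3 *: (4^-1 * \sum_a \sum_b (2 * p A Y a b * g A a b))
  + h^+4 *: (4^-1 * \sum_a \sum_b (g A a b ^+ 2)) :> R.
Proof.
rewrite /fobj.
rewrite -[_ *: (_ : R)]/(_ * _) -[_ *: (_ : R)]/(_ * _) -[_ *: (_ : R)]/(_ * _) -[_ *: (_ : R)]/(_ * _).
rewrite -mulrBr !(mulrCA _ 4^-1) -!mulrDr; congr (_ * _).
rewrite !sum2M sum2B !sum2D; apply: eq_bigr => a _; apply: eq_bigr => b _.
rewrite coldot_shift; ring.
Qed.

Lemma coldot_delta_l k i Y a b : coldot (delta_mx k i) Y a b = (a == i)%:R * Y k b.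
Proof.
rewrite /coldot (bigD1 k) //= big1 => [|l /negbTE lk]; rewrite mxE ?lk //= ?mul0r //.
by rewrite eqxx /= addr0.
Qed.

Lemma coldot_delta_r k i Y a b : coldot Y (delta_mx k i) a b = (b == i)%:R * Y k a.
Proof.
rewrite /coldot (bigD1 k) //= big1 => [|l /negbTE lk]; rewrite mxE ?lk //= ?mulr0 //.
by rewrite eqxx /= addr0 mulrC.
Qed.

Lemma sum_delta (F : 'I_n -> R) i : \sum_a (a == i)%:R * F a = F i.
Proof.
rewrite (bigD1 i) //= eqxx mul1r big1 ?addr0 // => a /negbTE ->; exact: mul0r.
Qed.

Lemma sum2_delta1 (H : 'I_n -> 'I_n -> R) i :
  \sum_a \sum_b (a == i)%:R * H a b = \sum_b H i b.
Proof.
transitivity (\sum_a (a == i)%:R * \sum_b H a b).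
  by apply: eq_bigr => a _; rewrite mulr_sumr.
exact: (sum_delta (fun a => \sum_b H a b)).
Qed.

Lemma sum2_delta2 (H : 'I_n -> 'I_n -> R) i :
  \sum_a \sum_b (b == i)%:R * H a b = \sum_a H a i.
Proof. by rewrite exchange_big; exact: (sum2_delta1 (fun b a => H a b)). Qed.

Definition G Y : Mat := \matrix_(k, i) \sum_b g Y i b * Y k b.

Lemma egrad_fobj Y : egrad (@fobj R d n) Y = G Y.
Proof.
apply/matrixP => k i; rewrite !mxE (D_poly (fobj_shift (delta_mx k i) Y)).
transitivity (4^-1 * \sum_a \sum_b ((a == i)%:R * (2 * g Y a b * Y k b)
   + (b == i)%:R * (2 * g Y a b * Y k a))).
  congr (_ * _); apply: eq_bigr => a _; apply: eq_bigr => b _.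
  by rewrite coldot_delta_l coldot_delta_r; ring.
rewrite -sum2D sum2_delta1 sum2_delta2.
have -> : \sum_a 2 * g Y a i * Y k a = 2 * \sum_b g Y i b * Y k b.
  by rewrite mulr_sumr; apply: eq_bigr => a _; rewrite coldotC; ring.
have -> : \sum_b 2 * g Y i b * Y k b = 2 * \sum_b g Y i b * Y k b.
  by rewrite mulr_sumr; apply: eq_bigr => a _; ring.
by field.
Qed.


Definition B2 (X V : Mat) : Mat := \matrix_(k, i) \sum_b (p V X i b * X k b + g X i b * V k b).
Definition C2 (X V : Mat) : Mat := \matrix_(k, i) \sum_b (g V i b * X k b + p V X i b * V k b).
Definition D2 (X V : Mat) : Mat := \matrix_(k, i) \sum_b (g V i b * V k b).

Lemma G_shift (X V : Mat) (h : R) :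
  G (h *: V + X) - G X = h *: B2 X V + h^+2 *: C2 X V + h^+3 *: D2 X V + h^+4 *: (0 : Mat).
Proof.
apply/matrixP => k i; rewrite !mxE mulr0 addr0 !mulr_sumr -sumrB -!big_split /=.
by apply: eq_bigr => b _; rewrite coldot_shift !mxE; ring.
Qed.

Lemma ehess_fobj (X V : Mat) : ehess (@fobj R d n) X V = B2 X V.
Proof.
rewrite /ehess.
have -> : egrad (@fobj R d n) = G by apply: boolp.funext => Y; exact: egrad_fobj.
exact: (D_poly (G_shift X V)).
Qed.


Lemma swap_sum (a : 'I_d -> R) (c : 'I_n -> R) (Y : Mat) :
  \sum_k a k * \sum_b c b * Y k b = \sum_b c b * \sum_k a k * Y k b.
Proof.
transitivity (\sum_k \sum_b a k * (c b * Y k b)).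
  by apply: eq_bigr => k _; rewrite mulr_sumr.
rewrite exchange_big; apply: eq_bigr => b _; rewrite mulr_sumr.
by apply: eq_bigr => k _; ring.
Qed.

Definition Vij (X : Mat) (i j : 'I_n) : Mat := \matrix_(k, a) ((a == i)%:R * X k j).
Definition lam (X : Mat) i := \sum_b g X i b ^+ 2.

Lemma tangent_V (X : Mat) i j : coldot X X i j = 0 -> tangent X (Vij X i j).
Proof.
move=> gij a; transitivity ((a == i)%:R * coldot X X a j).
  by rewrite /coldot mulr_sumr; apply: eq_bigr => k _; rewrite mxE; ring.
by case: eqP => [->|_]; [rewrite gij mulr0 | rewrite mul0r].
Qed.

Lemma key (X : Mat) i j : on_M X -> coldot X X i j = 0 ->
  frob (Vij X i j) (rhess (@fobj R d n) X (Vij X i j)) = 1 + lam X j - lam X i.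
Proof.
move=> hM gij; set V := Vij X i j.
rewrite /rhess ehess_fobj egrad_fobj.
have HV : forall k b, V k b = (b == i)%:R * X k j by move=> k b; rewrite mxE.
have pX : forall b, coldot V X i b = g X j b.
  by move=> b; rewrite /coldot; apply: eq_bigr => k _; rewrite HV eqxx mul1r.
have pV : forall b, coldot X V i b = 0.
  move=> b; transitivity ((b == i)%:R * g X i j); last by rewrite gij mulr0.
  by rewrite /coldot mulr_sumr; apply: eq_bigr => k _; rewrite HV; ring.
have Hki : forall k, B2 X V k i = \sum_b g X j b * X k b + X k j.
  move=> k; rewrite mxE.
  transitivity (\sum_b g X j b * X k b + \sum_b (b == i)%:R * (g X i b * X k j)).
    by rewrite -big_split /=; apply: eq_bigr => b _; rewrite pX pV HV; ring.
  by rewrite (sum_delta (fun b => g X i b * X k j)) hM mul1r.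
have lami : coldot X (G X) i i = lam X i.
  rewrite /coldot; under eq_bigr do rewrite mxE.
  by rewrite swap_sum; apply: eq_bigr => b _; rewrite expr2.
have hf : forall M : Mat, frob V M = \sum_k X k j * M k i.
  move=> M; rewrite /frob; apply: eq_bigr => k _.
  transitivity (\sum_a (a == i)%:R * (X k j * M k a)).
    by apply: eq_bigr => a _; rewrite HV; ring.
  exact: (sum_delta (fun a => X k j * M k a)).
rewrite hf.
transitivity (\sum_k X k j * B2 X V k i - coldot X (B2 X V) i i * coldot X X j i
   - coldot X (G X) i i * coldot X X j j).
  rewrite [coldot X X j i]/coldot [coldot X X j j]/coldot.
  rewrite !mulr_sumr -!sumrB; apply: eq_bigr => k _.
  by rewrite !mxE ?eqxx ?mul1r; ring.
rewrite coldotC gij hM lami mulr0 subr0 mulr1.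
under eq_bigr do rewrite Hki.
transitivity (lam X j + 1 - lam X i); last by ring.
congr (_ - _).
rewrite -(hM j) /coldot.
under eq_bigr do rewrite mulrDr.
rewrite big_split /= swap_sum; congr (_ + _).
Qed.

End S.

Theorem mainTheorem17 (R : realType) (d n : nat) (hd : (2 <= d)%N) (hn : (1 <= n)%N)
  (X : 'M[R]_(d, n)) :
  on_M X ->
  rgrad (@fobj R d n) X = 0 ->
  (forall V : 'M[R]_(d, n), tangent X V ->
     frob V (rhess (@fobj R d n) X V) <= 0) ->
  forall i j : 'I_n, coldot X X i j != 0.
Proof.
move=> hM _ hH i j.
case: (eqVneq i j) => [<-|ij]; first by rewrite hM oner_neq0.
apply/negP => /eqP gij.
have gji : coldot X X j i = 0 by rewrite coldotC.
have h1 := hH _ (@tangent_V _ _ _ X i j gij); rewrite key // in h1.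
have h2 := hH _ (@tangent_V _ _ _ X j i gji); rewrite key // in h2.
lra.
Qed.
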